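(* Every BCK-algebra $\mathcal A$ of order $n$ satisfies $\operatorname{cd}(\mathcal A)\ge\frac{3n-2}{n^2}$, and for each $n\ge3$ this bound is attained: the algebra $\mathcal M_n$ defined by $\mathcal M_3=\mathcal{PI}$ and $\mathcal M_n=\mathcal M_{n-1}\oplus\top$ for $n>3$ is a (linear) BCK-algebra of order $n$ with $\operatorname{cd}(\mathcal M_n)=\frac{3n-2}{n^2}$.
   Context: A BCK-algebra is a set $A$ with a binary operation $\cdot$ and a constant $0$ such that for all $x,y,z\in A$: (BCK1) $((x\cdot y)\cdot(x\cdot z))\cdot(z\cdot y)=0$; (BCK2) $(x\cdot(x\cdot y))\cdot y=0$; (BCK3) $x\cdot x=0$; (BCK4) $0\cdot x=0$; (BCK5) $x\cdot y=0$ and $y\cdot x=0$ imply $x=y$. The order $x\le y$ iff $x\cdot y=0$; the algebra is linear if this order is a chain. Define $x\wedge y:=y\cdot(y\cdot x)$; for finite $\mathcal A$, $\operatorname{cd}(\mathcal A)=|\{(x,y)\in A^2:x\wedge y=y\wedge x\}|/|A|^2$. $\mathcal{PI}$ is the BCK-algebra on $\{0,1,2\}$ with $1\cdot0=1$, $2\cdot0=2$, $2\cdot1=2$ and all other products $0$. Iséki's extension $\mathcal A\oplus\top$ adjoins a new element $\top$ with $x\cdot\top=0$, $\top\cdot\top=0$, $\top\cdot x=\top$ for $x\in A$. *)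

(* Defs.v *)
From mathcomp Require Import all_boot all_order all_algebra.
Set Implicit Arguments. Unset Strict Implicit. Unset Printing Implicit Defensive.
Import Order.TTheory GRing.Theory Num.Theory.

Section BCK.
Variables (T : finType) (op : T -> T -> T) (zero : T).

Definition is_BCK : Prop :=
  [/\ (forall x y z, op (op (op x y) (op x z)) (op z y) = zero),
      (forall x y, op (op x (op x y)) y = zero),
      (forall x, op x x = zero),
      (forall x, op zero x = zero) &
      (forall x y, op x y = zero -> op y x = zero -> x = y)].

Definition bck_le (x y : T) : bool := op x y == zero.

Definition bck_linear : Prop := forall x y, bck_le x y || bck_le y x.

Definition bck_meet (x y : T) : T := op y (op y x).

Definition cd : rat :=
  (#|[set p : T * T | bck_meet p.1 p.2 == bck_meet p.2 p.1]|%:R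
    / (#|T| ^ 2)%:R)%R.
End BCK.

Definition pi_op (x y : nat) : nat :=
  match x, y with
  | 1, 0 => 1
  | 2, 0 => 2
  | 2, 1 => 2
  | _, _ => 0
  end.

(* Operation of M_n on {0,...,n-1}: M_3 = PI and M_(m+1) = M_m (+) T
   where the new top element is m (the largest index). *)
Fixpoint mop (n : nat) (x y : nat) : nat :=
  match n with
  | 0 => pi_op x y
  | m.+1 =>
      if m < 3 then pi_op x y
      else if x == m then (if y == m then 0 else m)
      else if y == m then 0
      else mop m x y
  end.

(* M_n as an operation on 'I_n (the result always lies below n for n >= 3;
   insubd is only a totality device). *)
Definition Mop (n : nat) (x y : 'I_n) : 'I_n := insubd x (mop n x y).

(* Main.v *)
Require Import Defs.
From mathcomp Require Import all_boot all_order all_algebra zify.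
Import Order.TTheory GRing.Theory Num.Theory.

Definition g (x y : nat) := if x <= y then 0 else x.
Ltac split_if := match goal with |- context [if ?c then _ else _] =>
  lazymatch c with context [if _ then _ else _] => fail | _ => case: (boolP c) => ? end end.
Ltac gsolve := rewrite /g; repeat split_if; lia.
Lemma g_bck1 x y z : g (g (g x y) (g x z)) (g z y) = 0. Proof. gsolve. Qed.
Lemma g_bck2 x y : g (g x (g x y)) y = 0. Proof. gsolve. Qed.
Lemma g_bck5 x y : g x y = 0 -> g y x = 0 -> x = y. Proof. gsolve. Qed.
Lemma g_lin x y : (g x y == 0) || (g y x == 0). Proof. gsolve. Qed.
Lemma g_meet x y : (g y (g y x) == g x (g x y)) = [|| x == y, x == 0 | y == 0].
Proof. gsolve. Qed.
Lemma g_xx x : g x x = 0. Proof. gsolve. Qed.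
Lemma g_0x x : g 0 x = 0. Proof. gsolve. Qed.

Lemma mopE n x y : 3 <= n -> x < n -> y < n -> mop n x y = g x y.
Proof.
rewrite /g; elim: n x y => [//|m IH] x y hn hx hy /=.
case: ltnP => hm.
  have m2 : m = 2 by lia.
  subst m; move: x y hx hy => [|[|[|x]]] [|[|[|y]]] //.
case: eqP => [->|hxm].
  case: eqP => [->|hym]; first by rewrite leqnn.
  by case: leqP => //; lia.
case: eqP => [->|hym]; first by case: leqP => //; lia.
by rewrite IH //; lia.
Qed.

Lemma MopE n (x y : 'I_n) : 3 <= n -> val (Mop x y) = g x y.
Proof.
move=> hn; rewrite /Mop val_insubd mopE //.
suff -> : g x y < n by [].
by rewrite /g; case: (leqP x y) => _ /=; [lia | exact: ltn_ord].
Qed.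

Lemma card3 (T : finType) (z : T) :
  #|[set p : T * T | [|| p.1 == p.2, p.1 == z | p.2 == z]]| = 3 * #|T| - 2.
Proof.
have n0 : 0 < #|T| by apply/card_gt0P; exists z.
have -> : [set p : T * T | [|| p.1 == p.2, p.1 == z | p.2 == z]] =
  ((fun x => (x, x)) @: [set: T]) :|: (setX [set z] setT :|: setX setT [set z]).
  apply/setP => [[a b]]; rewrite !inE /=.
  case: (a =P b) => [<-|hab] /=.
    by rewrite (imset_f (fun x => (x, x)) (in_setT a)).
  have -> : ((a, b) \in (fun x => (x, x)) @: [set: T]) = false.
    by apply/negbTE/imsetP => -[x _ [ha hb]]; apply: hab; rewrite ha hb.
  by rewrite /= andbT.
rewrite cardsU card_imset; last by move=> x y [].
rewrite cardsT cardsU !cardsX !cards1 cardsT.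
have -> : setX [set z] [set: T] :&: setX [set: T] [set z] = [set (z, z)].
  by apply/setP => [[a b]]; rewrite !inE /= andbT.
have -> : (fun x => (x, x)) @: [set: T] :&: (setX [set z] [set: T] :|: setX [set: T] [set z]) = [set (z, z)].
  apply/setP => [[a b]]; rewrite !inE /= !andbT xpair_eqE.
  case: (a =P b) => [<-|hab].
    by rewrite (imset_f (fun x => (x, x)) (in_setT a)) orbb andbb.
  have -> : ((a, b) \in (fun x => (x, x)) @: [set: T]) = false.
    by apply/negbTE/imsetP => -[x _ [ha hb]]; apply: hab; rewrite ha hb.
  case: (a =P z) => // ha; case: (b =P z) => // hb; by case: hab; rewrite ha hb.
rewrite !cards1; lia.
Qed.

Lemma bck_x0 (T : finType) (op : T -> T -> T) (zero : T) :
  is_BCK op zero -> forall x, op x zero = x.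
Proof.
case=> H1 H2 H3 H4 H5 x.
have a : op x (op x zero) = zero by apply: H5; [apply: H2 | apply: H4].
apply: H5 => //.
by have := H2 x x; rewrite H3.
Qed.

Theorem theorem5p6 :
  (forall (T : finType) (op : T -> T -> T) (zero : T),
     is_BCK op zero ->
     ((3 * #|T|%:R - 2) / (#|T|%:R ^+ 2) <= cd op)%R)
  /\
  (forall (n : nat) (z : 'I_n), 3 <= n -> nat_of_ord z = 0 ->
     [/\ is_BCK (@Mop n) z, bck_linear (@Mop n) z &
         cd (@Mop n) = ((3 * n%:R - 2) / (n%:R ^+ 2) : rat)%R]).
Proof.
split.
  move=> T op zero hB.
  have x0 := @bck_x0 T op zero hB.
  case: (hB) => H1 H2 H3 H4 H5.
  have n0 : 0 < #|T| by apply/card_gt0P; exists zero.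
  rewrite /cd natrX; apply: ler_wpM2r; first by rewrite invr_ge0 exprn_ge0.
  have -> : (3 * #|T|%:R - 2 : rat)%R = ((3 * #|T| - 2)%:R)%R.
    by rewrite natrB ?natrM //; lia.
  rewrite ler_nat -(@card3 T zero); apply: subset_leq_card.
  apply/subsetP => [[a b]]; rewrite !inE /bck_meet /=.
  case/or3P => /eqP ->; rewrite ?eqxx ?x0 ?H3 ?H4 //.
move=> n z hn hz; split.
- split.
  + by move=> x y w; apply/val_inj; rewrite /= !MopE // hz g_bck1.
  + by move=> x y; apply/val_inj; rewrite /= !MopE // hz g_bck2.
  + by move=> x; apply/val_inj; rewrite /= !MopE // hz g_xx.
  + by move=> x; apply/val_inj; rewrite /= !MopE // hz g_0x.
  + move=> x y hxy hyx; apply/val_inj; apply: g_bck5.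
    * by rewrite -MopE // hxy /= hz.
    * by rewrite -MopE // hyx /= hz.
- by move=> x y; rewrite /bck_le -!val_eqE /= !MopE // hz g_lin.
- rewrite /cd; have -> : [set p : 'I_n * 'I_n | bck_meet (@Mop n) p.1 p.2 == bck_meet (@Mop n) p.2 p.1]
     = [set p : 'I_n * 'I_n | [|| p.1 == p.2, p.1 == z | p.2 == z]].
    apply/setP => [[a b]]; rewrite !inE /bck_meet /=.
    by rewrite -!val_eqE /= !MopE // hz g_meet.
  rewrite (@card3 _ z) card_ord natrX natrB ?natrM //; lia.
Qed.
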